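(* Let $p\neq 0$ be a real number and let $N=\begin{pmatrix} n_{00} & n_{01}\\ n_{10} & n_{11}\end{pmatrix}\in SL(2,\mathbb{Z})$ have eigenvalues $e^{p}$ and $e^{-p}$. Let $(x_0,x_1)$ be an eigenvector of $N$ for the eigenvalue $e^{p}$ and $(y_0,y_1)$ an eigenvector for $e^{-p}$, and put $z_2=x_1y_0-x_0y_1$. Then there is a co-compact discrete subgroup $\Gamma(p)$ of $G(p)$ of the form $$\Gamma(p)=(\Gamma_N\rtimes_{\psi}\mathbb{Z})\rtimes_{\phi} z_2\mathbb{Z},$$ where $\Gamma_N$ is a co-compact discrete subgroup of $H(1,1)$ such that (1) $\Gamma_N$ is invariant under $\psi(m)$ for every $m\in\mathbb{Z}$, and (2) $\Gamma_S=\Gamma_N\rtimes_\psi\mathbb{Z}$ is a co-compact discrete subgroup of $S=H(1,1)\rtimes_\psi\mathbb{R}$ which is invariant under $\phi(t)$ for every $t\in z_2\mathbb{Z}$.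
   Context: $H(1,1)$ is the $3$-dimensional Heisenberg group of real upper triangular unipotent $3\times 3$ matrices $\begin{pmatrix}1&x&z\\0&1&y\\0&0&1\end{pmatrix}$, identified with $\mathbb{R}^3$ with coordinates $(x,y,z)$, so $(x,y,z)(x',y',z')=(x+x',y+y',z+z'+xy')$. For $u\in\mathbb{R}$, $\psi(u)\in\mathrm{Aut}(H(1,1))$ is $\psi(u)(x,y,z)=(e^{pu}x,e^{-pu}y,z)$, and $S=H(1,1)\rtimes_\psi\mathbb{R}$ is $\mathbb{R}^4$ with coordinates $(x,y,z,u)$ and product $(x,y,z,u)(x',y',z',u')=(x+e^{pu}x',\,y+e^{-pu}y',\,z+z'+xe^{-pu}y',\,u+u')$. For $t\in\mathbb{R}$, $\phi(t)\in\mathrm{Aut}(S)$ is $\phi(t)(x,y,z,u)=(x,y,z+tu,u)$, and $G(p)=S\rtimes_\phi\mathbb{R}$ is $\mathbb{R}^5$ with coordinates $(x,y,z,u,t)$ and product $(x,y,z,u,t)(x',y',z',u',t')=(x+e^{pu}x',\,y+e^{-pu}y',\,z+z'+xe^{-pu}y'+tu',\,u+u',\,t+t')$. For a subgroup $\Gamma_N\subset H(1,1)$ invariant under $\psi(\mathbb{Z})$, $\Gamma_N\rtimes_\psi\mathbb{Z}$ denotes the subgroup $\{(h,u):h\in\Gamma_N,u\in\mathbb{Z}\}$ of $S$; similarly $\Gamma_S\rtimes_\phi z_2\mathbb{Z}=\{(s,t): s\in\Gamma_S,\ t\in z_2\mathbb{Z}\}\subset G(p)$. *)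

(* Defs.v *)
From HB Require Import structures.
From mathcomp Require Import all_boot all_order all_algebra.
From mathcomp Require Import all_classical all_reals all_analysis.
Import numFieldNormedType.Exports.
Set Implicit Arguments. Unset Strict Implicit. Unset Printing Implicit Defensive.
Import Order.TTheory GRing.Theory Num.Theory.
Local Open Scope classical_set_scope.
Local Open Scope ring_scope.

(* Points: H(1,1) = ((x,y),z); S = (((x,y),z),u); G(p) = ((((x,y),z),u),t). *)
Notation H3 R := (R * R * R)%type.
Notation S4 R := (R * R * R * R)%type.
Notation G5 R := (R * R * R * R * R)%type.

Section Groups.
Variables (R : realType) (p : R).

Definition mulH (a b : H3 R) : H3 R :=
  let: (x, y, z) := a in let: (x', y', z') := b in
  (x + x', y + y', z + z' + x * y').
Definition oneH : H3 R := (0, 0, 0).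

Definition psi (u : R) (a : H3 R) : H3 R :=
  let: (x, y, z) := a in (expR (p * u) * x, expR (- (p * u)) * y, z).

Definition mulS (a b : S4 R) : S4 R :=
  let: (x, y, z, u) := a in let: (x', y', z', u') := b in
  (x + expR (p * u) * x', y + expR (- (p * u)) * y',
   z + z' + x * expR (- (p * u)) * y', u + u').
Definition oneS : S4 R := (0, 0, 0, 0).

Definition phi (t : R) (s : S4 R) : S4 R :=
  let: (x, y, z, u) := s in (x, y, z + t * u, u).

Definition mulG (a b : G5 R) : G5 R :=
  let: (x, y, z, u, t) := a in let: (x', y', z', u', t') := b in
  (x + expR (p * u) * x', y + expR (- (p * u)) * y',
   z + z' + x * expR (- (p * u)) * y' + t * u', u + u', t + t').
Definition oneG : G5 R := (0, 0, 0, 0, 0).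
End Groups.

Definition is_subgroup (T : Type) (mul : T -> T -> T) (one : T) (A : set T) :=
  [/\ A one, (forall a b, A a -> A b -> A (mul a b)) &
      (forall a, A a -> exists2 b, A b & mul a b = one)].

Definition discrete_subset (T : topologicalType) (A : set T) :=
  forall a, A a -> exists U : set T, [/\ open U, U a & U `&` A = [set a]].

Definition cocompact (T : topologicalType) (mul : T -> T -> T) (A : set T) :=
  exists K : set T, compact K /\
    forall g, exists k, exists2 a, K k /\ A a & g = mul k a.

Definition is_int (R : realType) (u : R) := exists n : int, u = n%:~R.

(* Gamma_N semidirect_psi Z, as a subset of S *)
Definition semiZ (R : realType) (GN : set (H3 R)) : set (S4 R) :=
  [set s | let: (x, y, z, u) := s in GN (x, y, z) /\ is_int u].

(* Gamma_S semidirect_phi z2 Z, as a subset of G(p) *)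
Definition semiZ2 (R : realType) (GS : set (S4 R)) (z2 : R) : set (G5 R) :=
  [set g | let: (x, y, z, u, t) := g in
           GS (x, y, z, u) /\ exists n : int, t = z2 * n%:~R].

(* Main.v *)
From HB Require Import structures.
From mathcomp Require Import all_boot all_order all_algebra.
From mathcomp Require Import all_classical all_reals all_analysis.
From mathcomp Require Import ring lra.
Import Order.TTheory GRing.Theory Num.Theory numFieldNormedType.Exports.
Local Open Scope classical_set_scope.
Local Open Scope ring_scope.

Require Import Defs.
Section Tool.
Context {R : realType}.
Lemma cfst {T U : topologicalType} : continuous (@fst T U).
Proof. move=> x; exact: cvg_fst. Qed.
Lemma csnd {T U : topologicalType} : continuous (@snd T U).
Proof. move=> x; exact: cvg_snd. Qed.
Lemma cpair {T U V : topologicalType} (f : T -> U) (g : T -> V) :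
  continuous f -> continuous g -> continuous (fun x => (f x, g x)).
Proof. move=> cf cg x; exact: cvg_pair (cf x) (cg x). Qed.
Lemma ccomp {T U V : topologicalType} (f : T -> U) (g : U -> V) :
  continuous f -> continuous g -> continuous (fun x => g (f x)).
Proof. move=> cf cg x; exact: continuous_comp (cf x) (cg (f x)). Qed.
Lemma cD {T : topologicalType} (f g : T -> R) :
  continuous f -> continuous g -> continuous (fun x => f x + g x).
Proof. move=> cf cg x; exact: (continuousD (cf x) (cg x)). Qed.
Lemma cM {T : topologicalType} (f g : T -> R) :
  continuous f -> continuous g -> continuous (fun x => f x * g x).
Proof. move=> cf cg x; exact: (continuousM (cf x) (cg x)). Qed.
Lemma cN {T : topologicalType} (f : T -> R) :
  continuous f -> continuous (fun x => - f x).
Proof. move=> cf x; exact: (continuousN (cf x)). Qed.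
Lemma cC {T : topologicalType} (c : R) : continuous (fun _ : T => c).
Proof. exact: cst_continuous. Qed.
Lemma cE {T : topologicalType} (f : T -> R) :
  continuous f -> continuous (fun x => expR (f x)).
Proof. move=> cf x; apply: continuous_comp; [exact: cf | exact: continuous_expR]. Qed.

Lemma half_gt0 : (0:R) < 1/2. Proof. lra. Qed.
Lemma open_near {T : topologicalType} (f : T -> R) (c : R) :
  continuous f -> open [set t | `|f t - c| < 1/2].
Proof.
move=> cf.
have -> : [set t | `|f t - c| < 1/2] = f @^-1` (ball c (1/2)).
  by rewrite -ball_normE /ball_ /=; apply/funext => t /=; rewrite distrC.
by apply: open_comp; [move=> ??; exact: cf | exact: ball_open].
Qed.

Lemma int_small (n : int) : `|(n%:~R : R)| < 1/2 -> n = 0.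
Proof.
move=> h; apply/eqP; apply: contraLR h => hn.
rewrite -leNgt -intr_norm.
have : (1 <= `|n|)%R by rewrite -gtz0_ge1 normr_gt0.
rewrite -(ler_int R) => h1; apply: le_trans h1; lra.
Qed.
Lemma cid {T : topologicalType} : continuous (fun x : T => x).
Proof. by move=> x. Qed.
Lemma cfst' {T U V : topologicalType} (f : T -> U * V) :
  continuous f -> continuous (fun x => (f x).1).
Proof. move=> cf x; apply: continuous_comp; [exact: cf | exact: cfst]. Qed.
Lemma csnd' {T U V : topologicalType} (f : T -> U * V) :
  continuous f -> continuous (fun x => (f x).2).
Proof. move=> cf x; apply: continuous_comp; [exact: cf | exact: csnd]. Qed.

Lemma disc5 {T : topologicalType} (A : set T) (f1 f2 f3 f4 f5 : T -> R) :
  continuous f1 -> continuous f2 -> continuous f3 -> continuous f4 ->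
  continuous f5 ->
  (forall a, A a -> [/\ is_int (f1 a), is_int (f2 a), is_int (f3 a),
                        is_int (f4 a) & is_int (f5 a)]) ->
  (forall a b, A a -> A b -> f1 a = f1 b -> f2 a = f2 b -> f3 a = f3 b ->
     f4 a = f4 b -> f5 a = f5 b -> a = b) ->
  discrete_subset A.
Proof.
move=> c1 c2 c3 c4 c5 hint hinj a Aa.
have h0 : forall f : T -> R, `|f a - f a| < 1/2.
  by move=> f; rewrite subrr normr0; exact: half_gt0.
exists ([set t | `|f1 t - f1 a| < 1/2] `&` [set t | `|f2 t - f2 a| < 1/2] `&`
  [set t | `|f3 t - f3 a| < 1/2] `&` [set t | `|f4 t - f4 a| < 1/2] `&`
  [set t | `|f5 t - f5 a| < 1/2]); split.
- by repeat apply: openI; apply: open_near.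
- by split; [split; [split; [split|]|]|]; apply: h0.
apply/seteqP; split; last first.
  move=> b /= ->; split; last exact: Aa.
  by split; [split; [split; [split|]|]|]; apply: h0.
move=> b /= [[[[[h1 h2] h3] h4] h5] Ab].
have [[n1 e1] [n2 e2] [n3 e3] [n4 e4] [n5 e5]] := hint a Aa.
have [[m1 g1] [m2 g2] [m3 g3] [m4 g4] [m5 g5]] := hint b Ab.
have key : forall (u v : R) (n m : int), u = n%:~R -> v = m%:~R ->
    `|v - u| < 1/2 -> u = v.
  move=> u v n m -> -> h; rewrite -intrB in h.
  by have /eqP := int_small _ h; rewrite subr_eq0 => /eqP ->.
apply: esym; apply: hinj => //; apply: key; eauto.
Qed.
End Tool.

Lemma w0 : widen_ord (leqnSn 1) (ord0 : 'I_1) = 0 :> 'I_2. Proof. exact: val_inj. Qed.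
Lemma wm : (ord_max : 'I_2) = 1. Proof. exact: val_inj. Qed.
Lemma det2 (N : 'M[int]_2) : \det N = N 0 0 * N 1 1 - N 0 1 * N 1 0.
Proof.
rewrite (expand_det_row _ 0) !big_ord_recr big_ord0 /cofactor !det_mx11 !mxE /=.
rewrite add0r expr0 exprS expr0 !mul1r ?mulN1r ?mulrN. 
by congr (N _ _ * N _ _ - N _ _ * N _ _); apply: val_inj.
Qed.

Ltac cont := lazymatch goal with |- continuous ?f =>
  lazymatch f with
  | (fun x => (_, _)) => apply: cpair; [cont | cont]
  | (fun x => _ + _) => apply: cD; [cont | cont]
  | (fun x => _ * _) => apply: cM; [cont | cont]
  | (fun x => - _) => apply: cN; cont
  | (fun x => expR _) => apply: cE; cont
  | (fun x => x) => exact: cid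
  | @fst _ _ => exact: cfst
  | @snd _ _ => exact: csnd
  | (fun x => (_).1) => apply: cfst'; cont
  | (fun x => (_).2) => apply: csnd'; cont
  | _ => first [exact: cC | idtac "FAIL" f; fail 2]
  end end.

Lemma in01 {R : realType} (s : R) : 0 <= s <= 1 -> (`[0, 1]%classic : set R) s.
Proof. by move=> h; rewrite /= in_itv /=. Qed.

Lemma seg01 {R : realType} : compact (`[0, 1]%classic : set R).
Proof. exact: segment_compact. Qed.

Section Lat.
Context {R : realType} (x0 x1 y0 y1 : R).
Definition dd := x0 * y1 - x1 * y0.
Definition al (s t : R) := s * y1 - t * y0.
Definition be (s t : R) := x0 * t - x1 * s.
Definition Gr (s t c : R) : H3 R :=
  (al s t, be s t, al s t * be s t / 2 + c * (dd / 2)).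
Definition fA (h : H3 R) := (x0 * h.1.1 + y0 * h.1.2) / dd.
Definition fB (h : H3 R) := (x1 * h.1.1 + y1 * h.1.2) / dd.
Definition fC (h : H3 R) := (h.2 - h.1.1 * h.1.2 / 2) / (dd / 2).
Definition GN : set (H3 R) :=
  [set h | exists a b c : int, h = Gr a%:~R b%:~R c%:~R].

Context (hd : dd != 0).

Lemma fA_Gr s t c : fA (Gr s t c) = s.
Proof. rewrite /fA /Gr /al /be /=; move: hd; rewrite /dd => hd'; by field. Qed.
Lemma fB_Gr s t c : fB (Gr s t c) = t.
Proof. rewrite /fB /Gr /al /be /=; move: hd; rewrite /dd => hd'; by field. Qed.
Lemma fC_Gr s t c : fC (Gr s t c) = c.
Proof. rewrite /fC /Gr /al /be /=; move: hd; rewrite /dd => hd'; by field. Qed.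
Lemma GrK h : Gr (fA h) (fB h) (fC h) = h.
Proof.
case: h => [[X Y] Z]; rewrite /fA /fB /fC /Gr /al /be /=.
move: hd; rewrite /dd => hd'; congr (_, _, _); by field.
Qed.

Lemma mulH_Gr s t c s' t' c' :
  mulH (Gr s t c) (Gr s' t' c') = Gr (s + s') (t + t') (c + c' + (s * t' - s' * t)).
Proof. rewrite /mulH /Gr /al /be /dd /=; congr (_, _, _); [ring|ring|by field]. Qed.

Lemma Gr0 : Gr 0 0 0 = @oneH R.
Proof. by rewrite /Gr /al /be /oneH; congr (_, _, _); ring. Qed.

Lemma inGN h : (exists a b c : int, h = Gr a%:~R b%:~R c%:~R) -> GN h.
Proof. by []. Qed.

Lemma GN_one : GN (@oneH R).
Proof. by apply: inGN; exists 0, 0, 0; rewrite -Gr0. Qed.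

Lemma GN_mul a b : GN a -> GN b -> GN (mulH a b).
Proof.
move=> [a1 [b1 [c1 ->]]] [a2 [b2 [c2 ->]]].
apply: inGN; exists (a1 + a2), (b1 + b2), (c1 + c2 + (a1 * b2 - a2 * b1)).
by rewrite mulH_Gr !(intrD, intrN, intrM).
Qed.

Lemma GN_inv a : GN a -> exists2 b, GN b & mulH a b = @oneH R.
Proof.
move=> [a1 [b1 [c1 ->]]]; exists (Gr (- a1)%:~R (- b1)%:~R (- c1)%:~R).
  by apply: inGN; exists (- a1), (- b1), (- c1).
rewrite mulH_Gr -Gr0 !intrN; congr Gr; ring.
Qed.

Lemma GN_shift h (j : int) : GN h ->
  GN (h.1.1, h.1.2, h.2 + (x1 * y0 - x0 * y1) * j%:~R).
Proof.
move=> [a [b [c ->]]]; apply: inGN; exists a, b, (c - j * 2).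
rewrite /Gr /= !(intrD, intrN, intrM) /dd; congr (_, _, _); by field.
Qed.

Lemma GN_int h : GN h -> [/\ is_int (fA h), is_int (fB h) & is_int (fC h)].
Proof.
move=> [a [b [c ->]]]; rewrite fA_Gr fB_Gr fC_Gr.
by split; [exists a | exists b | exists c].
Qed.

Lemma GN_eq h h' : fA h = fA h' -> fB h = fB h' -> fC h = fC h' -> h = h'.
Proof. by move=> e1 e2 e3; rewrite -(GrK h) -(GrK h') e1 e2 e3. Qed.

Lemma in01_floor (v : R) : 0 <= v - (Num.floor v)%:~R <= 1.
Proof.
have /andP [h1 h2] := floor_itv v; rewrite intrD in h2.
apply/andP; split; lra.
Qed.

Lemma GN_dec g : exists s t r, [/\ 0 <= s <= 1, 0 <= t <= 1, 0 <= r <= 1 &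
  exists2 c, GN c & g = mulH (Gr s t r) c].
Proof.
set s := fA g; set t := fB g.
set a := Num.floor s; set b := Num.floor t.
set W := fC g - ((s - a%:~R) * b%:~R - a%:~R * (t - b%:~R)).
set c := Num.floor W.
exists (s - a%:~R), (t - b%:~R), (W - c%:~R); split; try exact: in01_floor.
exists (Gr a%:~R b%:~R c%:~R); first by apply: inGN; exists a, b, c.
rewrite mulH_Gr -{1}(GrK g) -/s -/t; congr Gr; rewrite /W; ring.
Qed.

Definition box3 : set (R * R * R) := `[0, 1]%classic `*` `[0, 1]%classic `*` `[0, 1]%classic.
Definition FH (q : R * R * R) := Gr q.1.1 q.1.2 q.2.
Lemma cFH : continuous FH.
Proof. rewrite /FH /Gr /al /be; cont. Qed.
Lemma box3_compact : compact box3.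
Proof. exact: compact_setX (compact_setX seg01 seg01) seg01. Qed.
Lemma KH_compact : compact (FH @` box3).
Proof. exact: continuous_compact (continuous_subspaceT cFH) box3_compact. Qed.

Lemma box3_in s t r : 0 <= s <= 1 -> 0 <= t <= 1 -> 0 <= r <= 1 -> box3 (s, t, r).
Proof. by move=> *; split; [split|]; apply: in01. Qed.

Lemma is_int0 : is_int (0 : R).
Proof. by exists 0. Qed.

Lemma cfA : continuous fA.
Proof. rewrite /fA; cont. Qed.
Lemma cfB : continuous fB.
Proof. rewrite /fB; cont. Qed.
Lemma cfC : continuous fC.
Proof. rewrite /fC; cont. Qed.

Lemma GN_discrete : discrete_subset GN.
Proof.
apply: (@disc5 R _ GN fA fB fC (fun _ => 0) (fun _ => 0)).
- exact: cfA.
- exact: cfB.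
- exact: cfC.
- exact: cC.
- exact: cC.
- by move=> a /GN_int [? ? ?]; split=> //; exact: is_int0.
- by move=> a b _ _ e1 e2 e3 _ _; apply: GN_eq.
Qed.

Lemma GN_cocompact : cocompact (@mulH R) GN.
Proof.
exists (FH @` box3); split; first exact: KH_compact.
move=> g; have [s [t [r [hs ht hr [c Gc ->]]]]] := GN_dec g.
exists (Gr s t r), c => //; split => //.
by exists (s, t, r) => //; apply: box3_in.
Qed.

Section Psi.
Context (p : R) (m00 m01 m10 m11 : int).
Context (hdet : m00 * m11 - m01 * m10 = 1).
Context (hx0 : m00%:~R * x0 + m01%:~R * x1 = expR p * x0).
Context (hx1 : m10%:~R * x0 + m11%:~R * x1 = expR p * x1).
Context (hy0 : m00%:~R * y0 + m01%:~R * y1 = expR (- p) * y0).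
Context (hy1 : m10%:~R * y0 + m11%:~R * y1 = expR (- p) * y1).

Lemma psiE u h : psi p u h = (expR (p * u) * h.1.1, expR (- (p * u)) * h.1.2, h.2).
Proof. by case: h => [[a b] c]. Qed.

Lemma psi_add u v h : psi p (u + v) h = psi p u (psi p v h).
Proof.
rewrite !psiE /= mulrDr opprD !expRD; congr (_, _, _); ring.
Qed.

Lemma psi0 h : psi p 0 h = h.
Proof. by case: h => [[a b] c]; rewrite psiE /= mulr0 oppr0 expR0 !mul1r. Qed.

Lemma expRNK (v : R) : expR v * expR (- v) = 1.
Proof. by rewrite -expRD subrr expR0. Qed.

Lemma psi_mul u a b : psi p u (mulH a b) = mulH (psi p u a) (psi p u b).
Proof.
case: a => [[a1 a2] a3]; case: b => [[b1 b2] b3]; rewrite !psiE /mulH /=.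
congr (_, _, _); try ring.
transitivity (a3 + b3 + a1 * b2 * (expR (p * u) * expR (- (p * u)))); last ring.
by rewrite expRNK mulr1.
Qed.

Let hdetR : m00%:~R * m11%:~R - m01%:~R * m10%:~R = 1 :> R.
Proof. by rewrite -!intrM -intrB hdet. Qed.

Let hlm : expR p * expR (- p) = 1.
Proof. exact: expRNK. Qed.

Let inv_lem (X Y : R) : expR (- p) * X = Y -> X = expR p * Y.
Proof. by move=> <-; rewrite mulrA hlm mul1r. Qed.

Let inv_lem' (X Y : R) : expR p * X = Y -> X = expR (- p) * Y.
Proof. by move=> <-; rewrite mulrA [expR (- p) * _]mulrC hlm mul1r. Qed.

Let ky0 : m11%:~R * y0 - m01%:~R * y1 = expR p * y0.
Proof.
apply: inv_lem.
transitivity (m11%:~R * (expR (- p) * y0) - m01%:~R * (expR (- p) * y1)); first ring.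
rewrite -hy0 -hy1.
transitivity ((m00%:~R * m11%:~R - m01%:~R * m10%:~R) * y0); first ring.
by rewrite hdetR mul1r.
Qed.

Let ky1 : m00%:~R * y1 - m10%:~R * y0 = expR p * y1.
Proof.
apply: inv_lem.
transitivity (m00%:~R * (expR (- p) * y1) - m10%:~R * (expR (- p) * y0)); first ring.
rewrite -hy0 -hy1.
transitivity ((m00%:~R * m11%:~R - m01%:~R * m10%:~R) * y1); first ring.
by rewrite hdetR mul1r.
Qed.

Let kx0 : m11%:~R * x0 - m01%:~R * x1 = expR (- p) * x0.
Proof.
apply: inv_lem'.
transitivity (m11%:~R * (expR p * x0) - m01%:~R * (expR p * x1)); first ring.
rewrite -hx0 -hx1.
transitivity ((m00%:~R * m11%:~R - m01%:~R * m10%:~R) * x0); first ring.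
by rewrite hdetR mul1r.
Qed.

Let kx1 : m00%:~R * x1 - m10%:~R * x0 = expR (- p) * x1.
Proof.
apply: inv_lem'.
transitivity (m00%:~R * (expR p * x1) - m10%:~R * (expR p * x0)); first ring.
rewrite -hx0 -hx1.
transitivity ((m00%:~R * m11%:~R - m01%:~R * m10%:~R) * x1); first ring.
by rewrite hdetR mul1r.
Qed.

Lemma GN_psi1 h : GN h -> GN (psi p 1 h).
Proof.
move=> [a [b [c ->]]]; apply: inGN.
exists (m00 * a + m01 * b), (m10 * a + m11 * b), c.
rewrite psiE /Gr /= mulr1 !(intrD, intrM).
have E1 : al (m00%:~R * a%:~R + m01%:~R * b%:~R) (m10%:~R * a%:~R + m11%:~R * b%:~R)
   = expR p * al a%:~R b%:~R.
  rewrite /al; transitivity (a%:~R * (m00%:~R * y1 - m10%:~R * y0)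
     - b%:~R * (m11%:~R * y0 - m01%:~R * y1)); first ring.
  by rewrite ky0 ky1; ring.
have E2 : be (m00%:~R * a%:~R + m01%:~R * b%:~R) (m10%:~R * a%:~R + m11%:~R * b%:~R)
   = expR (- p) * be a%:~R b%:~R.
  rewrite /be; transitivity (b%:~R * (m11%:~R * x0 - m01%:~R * x1)
     - a%:~R * (m00%:~R * x1 - m10%:~R * x0)); first ring.
  by rewrite kx0 kx1; ring.
rewrite E1 E2; congr (_, _, _).
transitivity ((expR p * expR (- p)) * (al a%:~R b%:~R * be a%:~R b%:~R) / 2
  + c%:~R * (dd / 2)); last ring.
by rewrite hlm mul1r.
Qed.

Lemma GN_psiN1 h : GN h -> GN (psi p (-1) h).
Proof.
move=> [a [b [c ->]]]; apply: inGN.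
exists (m11 * a - m01 * b), (m00 * b - m10 * a), c.
rewrite psiE /Gr /= mulrN1 opprK !(intrD, intrM, intrN).
have E1 : al (m11%:~R * a%:~R + - (m01%:~R * b%:~R)) (m00%:~R * b%:~R + - (m10%:~R * a%:~R))
   = expR (- p) * al a%:~R b%:~R.
  rewrite /al; transitivity (a%:~R * (m10%:~R * y0 + m11%:~R * y1)
     - b%:~R * (m00%:~R * y0 + m01%:~R * y1)); first ring.
  by rewrite hy0 hy1; ring.
have E2 : be (m11%:~R * a%:~R + - (m01%:~R * b%:~R)) (m00%:~R * b%:~R + - (m10%:~R * a%:~R))
   = expR p * be a%:~R b%:~R.
  rewrite /be; transitivity (b%:~R * (m00%:~R * x0 + m01%:~R * x1)
     - a%:~R * (m10%:~R * x0 + m11%:~R * x1)); first ring.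
  by rewrite hx0 hx1; ring.
rewrite E1 E2; congr (_, _, _).
transitivity ((expR p * expR (- p)) * (al a%:~R b%:~R * be a%:~R b%:~R) / 2
  + c%:~R * (dd / 2)); last ring.
by rewrite hlm mul1r.
Qed.

Lemma GN_psi_nat (n : nat) h : GN h ->
  GN (psi p n%:R h) /\ GN (psi p (- n%:R) h).
Proof.
elim: n h => [|n IH] h Gh; first by rewrite oppr0 psi0.
rewrite -natr1 opprD !psi_add; split.
  by apply: (proj1 (IH _ _)); apply: GN_psi1.
by apply: (proj2 (IH _ _)); apply: GN_psiN1.
Qed.

Lemma GN_psi (m : int) h : GN h -> GN (psi p m%:~R h).
Proof.
case: m => n Gh; first exact: (proj1 (GN_psi_nat n _ Gh)).
by rewrite NegzE intrN; exact: (proj2 (GN_psi_nat n.+1 _ Gh)).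
Qed.

Lemma psiK u h : psi p u (psi p (- u) h) = h.
Proof. by rewrite -psi_add subrr psi0. Qed.

Lemma GN_psi_img (m : int) : psi p m%:~R @` GN = GN.
Proof.
apply/seteqP; split=> [_ [h Gh <-]|h Gh]; first exact: GN_psi.
exists (psi p (- m)%:~R h); first exact: GN_psi.
by rewrite intrN psiK.
Qed.

Definition zz := x1 * y0 - x0 * y1.
Lemma zz_neq0 : zz != 0.
Proof. by rewrite /zz -opprB oppr_eq0. Qed.

Lemma semiZP h u : semiZ GN (h, u) -> GN h /\ is_int u.
Proof. by case: h => [[a b] c]. Qed.
Lemma semiZI (s : S4 R) : GN s.1 -> is_int s.2 -> semiZ GN s.
Proof. by case: s => [[[a b] c] u]. Qed.

Lemma mulS_eq h u h' u' : mulS p (h, u) (h', u') = (mulH h (psi p u h'), u + u').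
Proof.
case: h => [[a b] c]; case: h' => [[a' b'] c']; rewrite /mulS /mulH psiE /=.
congr (_, _, _, _); ring.
Qed.

Lemma GS_one : semiZ GN (@oneS R).
Proof. by apply: semiZI; [exact: GN_one | exact: is_int0]. Qed.

Lemma GS_mul a b : semiZ GN a -> semiZ GN b -> semiZ GN (mulS p a b).
Proof.
case: a => h u; case: b => h' u'.
move=> /semiZP [Gh [n ->]] /semiZP [Gh' [n' ->]].
rewrite mulS_eq; apply: semiZI => /=.
  by apply: GN_mul => //; apply: GN_psi.
by exists (n + n'); rewrite intrD.
Qed.

Lemma GS_inv a : semiZ GN a -> exists2 b, semiZ GN b & mulS p a b = @oneS R.
Proof.
case: a => h u; move=> /semiZP [Gh [n ->]].
have [hi Ghi hhi] := GN_inv _ Gh.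
exists (psi p (- n)%:~R hi, (- n)%:~R).
  by apply: semiZI => /=; [exact: GN_psi | exists (- n)].
by rewrite mulS_eq intrN psiK hhi subrr.
Qed.

Lemma phiE t (s : S4 R) : phi t s = (s.1.1.1, s.1.1.2, s.1.2 + t * s.2, s.2).
Proof. by case: s => [[[a b] c] u]. Qed.

Lemma phi_add t t' (s : S4 R) : phi t (phi t' s) = phi (t + t') s.
Proof. rewrite !phiE /=; congr (_, _, _, _); ring. Qed.

Lemma phi0 (s : S4 R) : phi 0 s = s.
Proof. by case: s => [[[a b] c] u]; rewrite phiE /= mul0r addr0. Qed.

Lemma GS_phi (k : int) s : semiZ GN s -> semiZ GN (phi (zz * k%:~R) s).
Proof.
case: s => h u; move=> /semiZP [Gh [n ->]]; rewrite phiE; apply: semiZI => /=; last by exists n.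
by have := GN_shift _ (k * n) Gh; rewrite intrM mulrA.
Qed.

Lemma GS_phi_img (k : int) : phi (zz * k%:~R) @` semiZ GN = semiZ GN.
Proof.
apply/seteqP; split=> [_ [s Gs <-]|s Gs]; first exact: GS_phi.
exists (phi (zz * (- k)%:~R) s); first exact: GS_phi.
by rewrite phi_add intrN mulrN subrr phi0.
Qed.

Lemma GS_discrete : discrete_subset (semiZ GN).
Proof.
apply: (@disc5 R _ (semiZ GN) (fun s => fA s.1) (fun s => fB s.1)
  (fun s => fC s.1) (fun s => s.2) (fun _ => 0)).
- rewrite /fA; cont.
- rewrite /fB; cont.
- rewrite /fC; cont.
- cont.
- exact: cC.
- case=> h u /semiZP [/GN_int [? ? ?] ?]; split=> //; exact: is_int0.
- case=> h u [h' u'] /= _ _ e1 e2 e3 e4 _.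
  by rewrite e4 (GN_eq _ _ e1 e2 e3).
Qed.

Definition FS (q : R * R * R * R) : S4 R := (psi p q.2 (FH q.1), q.2).
Definition box4 : set (R * R * R * R) := box3 `*` `[0, 1]%classic.

Lemma cFS : continuous FS.
Proof. rewrite /FS /FH /Gr /al /be /=; cont. Qed.

Lemma KS_compact : compact (FS @` box4).
Proof.
exact: continuous_compact (continuous_subspaceT cFS)
  (compact_setX box3_compact seg01).
Qed.

Lemma GS_dec g : exists2 q, box4 q & exists2 c, semiZ GN c & g = mulS p (FS q) c.
Proof.
case: g => h u; set n := Num.floor u; set u0 := u - n%:~R.
have [s [t [r [hs ht hr [c Gc e]]]]] := GN_dec (psi p (- u0) h).
exists ((s, t, r), u0); first by split; [apply: box3_in | apply: in01; exact: in01_floor].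
exists (c, n%:~R); first by apply: semiZI => //; exists n.
change (FS ((s, t, r), u0)) with (psi p u0 (Gr s t r), u0).
by rewrite mulS_eq -psi_mul -e psiK /u0 subrK.
Qed.

Lemma GS_cocompact : cocompact (mulS p) (semiZ GN).
Proof.
exists (FS @` box4); split; first exact: KS_compact.
move=> g; have [q bq [c Gc ->]] := GS_dec g.
by exists (FS q), c => //; split => //; exists q.
Qed.

Lemma semiZ2P (s : S4 R) t : semiZ2 (semiZ GN) zz (s, t) ->
  semiZ GN s /\ exists n : int, t = zz * n%:~R.
Proof. by case: s => [[[a b] c] u]. Qed.
Lemma semiZ2I (s : S4 R) t : semiZ GN s -> (exists n : int, t = zz * n%:~R) ->
  semiZ2 (semiZ GN) zz (s, t).
Proof. by case: s => [[[a b] c] u]. Qed.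

Lemma mulG_eq (s : S4 R) t s' t' : mulG p (s, t) (s', t') = (mulS p s (phi t s'), t + t').
Proof.
case: s => [[[a b] c] u]; case: s' => [[[a' b'] c'] u']; rewrite /mulG /mulS /phi /=.
congr (_, _, _, _, _); ring.
Qed.

Lemma phi_mul t a b : phi t (mulS p a b) = mulS p (phi t a) (phi t b).
Proof.
case: a => [[[a1 a2] a3] a4]; case: b => [[[b1 b2] b3] b4]; rewrite /mulS /phi /=.
congr (_, _, _, _); ring.
Qed.

Lemma Gam_one : semiZ2 (semiZ GN) zz (@oneG R).
Proof. have h0 : exists n : int, (0:R) = zz * n%:~R by exists 0; rewrite mulr0.
exact: (@semiZ2I (@oneS R) 0 GS_one h0). Qed.

Lemma Gam_mul a b : semiZ2 (semiZ GN) zz a -> semiZ2 (semiZ GN) zz b ->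
  semiZ2 (semiZ GN) zz (mulG p a b).
Proof.
case: a => s t; case: b => s' t'.
move=> /semiZ2P [Gs [n ->]] /semiZ2P [Gs' [n' ->]].
rewrite mulG_eq; apply: semiZ2I.
  by apply: GS_mul => //; apply: GS_phi.
by exists (n + n'); rewrite intrD mulrDr.
Qed.

Lemma Gam_inv a : semiZ2 (semiZ GN) zz a ->
  exists2 b, semiZ2 (semiZ GN) zz b & mulG p a b = @oneG R.
Proof.
case: a => s t; move=> /semiZ2P [Gs [n ->]].
have [si Gsi hsi] := GS_inv _ Gs.
exists (phi (zz * (- n)%:~R) si, zz * (- n)%:~R).
  by apply: semiZ2I; [exact: GS_phi | exists (- n)].
by rewrite mulG_eq phi_add intrN mulrN subrr phi0 hsi.
Qed.

Lemma Gam_discrete : discrete_subset (semiZ2 (semiZ GN) zz).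
Proof.
apply: (@disc5 R _ (semiZ2 (semiZ GN) zz) (fun g => fA g.1.1) (fun g => fB g.1.1)
  (fun g => fC g.1.1) (fun g => g.1.2) (fun g => g.2 / zz)).
- rewrite /fA; cont.
- rewrite /fB; cont.
- rewrite /fC; cont.
- cont.
- cont.
- case=> [[h u] t] /semiZ2P [/semiZP [/GN_int [? ? ?] ?] [n ->]] /=.
  split=> //; exists n; have := zz_neq0; move=> hz; by field.
- case=> [[h u] t] [[h' u'] t'] /= _ _ e1 e2 e3 e4 e5.
  rewrite e4 (GN_eq _ _ e1 e2 e3).
  have hz := zz_neq0.
  have -> : t = t / zz * zz by field.
  by rewrite e5; congr (_, _); field.
Qed.

Definition FG (q : R * R * R * R * R) : G5 R := (phi (zz * q.2) (FS q.1), zz * q.2).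
Definition box5 : set (R * R * R * R * R) := box4 `*` `[0, 1]%classic.

Lemma cFG : continuous FG.
Proof. rewrite /FG /FS /FH /Gr /al /be /phi /=; cont. Qed.

Lemma KG_compact : compact (FG @` box5).
Proof.
exact: continuous_compact (continuous_subspaceT cFG)
  (compact_setX (compact_setX box3_compact seg01) seg01).
Qed.

Lemma Gam_cocompact : cocompact (mulG p) (semiZ2 (semiZ GN) zz).
Proof.
exists (FG @` box5); split; first exact: KG_compact.
case=> sg t.
set n := Num.floor (t / zz); set r := t / zz - n%:~R.
have [q bq [c Gc e]] := GS_dec (phi (- (zz * r)) sg).
exists (FG (q, r)), (c, zz * n%:~R); last first.
  change (FG (q, r)) with (phi (zz * r) (FS q), zz * r).
  rewrite mulG_eq -phi_mul -e phi_add subrr phi0.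
  congr (_, _); rewrite /r; have hz := zz_neq0; by field.
split; last by apply: semiZ2I => //; exists n.
exists (q, r) => //; split => //; apply: in01; exact: in01_floor.
Qed.

End Psi.
End Lat.

Lemma dd_neq0 {R : realType} (p x0 x1 y0 y1 : R) (m00 m01 m10 m11 : int) :
  p != 0 ->
  m00%:~R * x0 + m01%:~R * x1 = expR p * x0 ->
  m10%:~R * x0 + m11%:~R * x1 = expR p * x1 ->
  m00%:~R * y0 + m01%:~R * y1 = expR (- p) * y0 ->
  m10%:~R * y0 + m11%:~R * y1 = expR (- p) * y1 ->
  (x0 != 0) || (x1 != 0) -> (y0 != 0) || (y1 != 0) ->
  dd x0 x1 y0 y1 != 0.
Proof.
move=> hp hx0 hx1 hy0 hy1 hxn hyn; apply/negP; rewrite /dd => /eqP hd0.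
have hlm : expR (- p) - expR p != 0.
  rewrite subr_eq0; apply/negP => /eqP /expR_inj h.
  have p0 : p = 0 by lra.
  by rewrite p0 eqxx in hp.
have e1 : (expR (- p) - expR p) * (x0 * y0) = m01%:~R * (x0 * y1 - x1 * y0).
  transitivity (x0 * (expR (- p) * y0) - y0 * (expR p * x0)); first ring.
  by rewrite -hy0 -hx0; ring.
have e2 : (expR (- p) - expR p) * (x1 * y1) = - (m10%:~R * (x0 * y1 - x1 * y0)).
  transitivity (x1 * (expR (- p) * y1) - y1 * (expR p * x1)); first ring.
  by rewrite -hy1 -hx1; ring.
rewrite hd0 mulr0 in e1; rewrite hd0 mulr0 oppr0 in e2.
move/eqP: e1; rewrite mulf_eq0 (negbTE hlm) /= mulf_eq0 => /orP e1.
move/eqP: e2; rewrite mulf_eq0 (negbTE hlm) /= mulf_eq0 => /orP e2.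
case/orP: hxn => hx.
- have y00 : y0 = 0 by case: e1 => /eqP // h; move: hx; rewrite h eqxx.
  move/eqP: hd0; rewrite y00 mulr0 subr0 mulf_eq0 (negbTE hx) /= => /eqP y10.
  by move: hyn; rewrite y00 y10 eqxx.
- have y10 : y1 = 0 by case: e2 => /eqP // h; move: hx; rewrite h eqxx.
  move/eqP: hd0; rewrite y10 mulr0 sub0r oppr_eq0 mulf_eq0 (negbTE hx) /= => /eqP y00.
  by move: hyn; rewrite y00 y10 eqxx.
Qed.

Lemma i2 (i : 'I_2) : i = 0 \/ i = 1.
Proof. case: i => [[|[|k]]] // hi; [left|right]; exact: val_inj. Qed.

Lemma cV_nz {R : realType} (x : 'cV[R]_2) : x != 0 -> (x 0 0 != 0) || (x 1 0 != 0).
Proof.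
move=> hx; rewrite -negb_and; apply: contra hx => /andP [/eqP h0 /eqP h1].
apply/eqP/matrixP => i j; rewrite mxE [j]ord1.
by case: (i2 i) => ->.
Qed.

Lemma eig_eqs {R : realType} (N : 'M[int]_2) (x : 'cV[R]_2) l :
  (map_mx intr N : 'M[R]_2) *m x = l *: x ->
  (N 0 0)%:~R * x 0 0 + (N 0 1)%:~R * x 1 0 = l * x 0 0 /\
  (N 1 0)%:~R * x 0 0 + (N 1 1)%:~R * x 1 0 = l * x 1 0.
Proof.
move=> H; split.
  have := congr1 (fun M : 'M[R]_(2,1) => M 0 0) H.
  by rewrite !mxE big_ord_recr big_ord1 /= !mxE w0 wm.
have := congr1 (fun M : 'M[R]_(2,1) => M 1 0) H.
by rewrite !mxE big_ord_recr big_ord1 /= !mxE w0 wm.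
Qed.

Theorem proposition2p2 (R : realType) (p : R) (N : 'M[int]_2)
  (x y : 'cV[R]_2) :
  p != 0 ->
  \det N = 1 ->
  eigenvalue (map_mx intr N : 'M[R]_2) (expR p) ->
  eigenvalue (map_mx intr N : 'M[R]_2) (expR (- p)) ->
  x != 0 -> (map_mx intr N : 'M[R]_2) *m x = expR p *: x ->
  y != 0 -> (map_mx intr N : 'M[R]_2) *m y = expR (- p) *: y ->
  let z2 := x 1 0 * y 0 0 - x 0 0 * y 1 0 in
  exists GN : set (H3 R),
    [/\ is_subgroup (@mulH R) (@oneH R) GN,
        discrete_subset GN,
        cocompact (@mulH R) GN,
        (forall m : int, psi p m%:~R @` GN = GN) &
        let GS := semiZ GN in
        [/\ is_subgroup (mulS p) (@oneS R) GS,
            discrete_subset GS,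
            cocompact (mulS p) GS,
            (forall k : int, phi (z2 * k%:~R) @` GS = GS) &
            let Gam := semiZ2 GS z2 in
            [/\ is_subgroup (mulG p) (@oneG R) Gam,
                discrete_subset Gam &
                cocompact (mulG p) Gam]]].
Proof.
move=> hp hdet _ _ hxn hx hyn hy z2.
have [hx0 hx1] := eig_eqs _ _ _ hx.
have [hy0 hy1] := eig_eqs _ _ _ hy.
have hdet' : N 0 0 * N 1 1 - N 0 1 * N 1 0 = 1 by rewrite -det2.
have hd := dd_neq0 _ _ _ _ _ _ _ _ _ hp hx0 hx1 hy0 hy1 (cV_nz _ hxn) (cV_nz _ hyn).
have U := (@GN_psi_img R _ _ _ _ _ _ _ _ _ hdet' hx0 hx1 hy0 hy1).
exists (GN (x 0 0) (x 1 0) (y 0 0) (y 1 0)); split.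
- split; [exact: GN_one | exact: GN_mul | exact: GN_inv].
- exact: GN_discrete.
- exact: GN_cocompact.
- exact: U.
cbv zeta; split.
- split; [exact: GS_one | exact: (GS_mul _ _ _ _ _ _ _ _ _ hdet' hx0 hx1 hy0 hy1) |].
  exact: (GS_inv _ _ _ _ _ _ _ _ _ hdet' hx0 hx1 hy0 hy1).
- exact: GS_discrete.
- exact: (GS_cocompact _ _ _ _ hd p).
- by move=> k; apply: GS_phi_img.
split.
- split; [exact: Gam_one | exact: (Gam_mul _ _ _ _ _ _ _ _ _ hdet' hx0 hx1 hy0 hy1) |].
  exact: (Gam_inv _ _ _ _ _ _ _ _ _ hdet' hx0 hx1 hy0 hy1).
- exact: Gam_discrete.
- exact: (Gam_cocompact _ _ _ _ hd p).
Qed.
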